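(* Let $s,t,\eta>0$, $A\in\mathbb{R}^{m\times N}$ and $K\subset[N]$. Suppose there exists $\nu\in\mathbb{R}^m$ with $A^T\nu\in H_K^t$ and $\|\nu\|_2\le s$. Let $x_0=\mathbb{1}_K$ and $b=Ax_0+n$ with $n\in\mathbb{R}^m$, $\|n\|_2\le\eta$. Then any solution $x_*$ of $$\min\|Ax-b\|_2\ \text{subject to}\ x\in[0,1]^N,$$ or of $$\min\|x\|_1\ \text{subject to}\ \|Ax-b\|_2\le\eta,\ x\in[0,1]^N,$$ satisfies $\|x_*-x_0\|_2\le \frac{2s}{t}\eta$.
   Context: $\mathbb{1}_K$ is the indicator vector of $K\subset[N]$. For $t>0$, $H_K^t=\{w\in\mathbb{R}^N: w_i<-t \text{ for } i\in K,\ w_i>t \text{ for } i\notin K\}$. *)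

(* Defs.v *)
(* vectors in R^N are column vectors 'cV[R]_N over an rcfType R
   (real closed field, so that Num.sqrt is available). *)
From mathcomp Require Import all_boot all_order all_algebra.
Set Implicit Arguments. Unset Strict Implicit. Unset Printing Implicit Defensive.
Import Order.TTheory GRing.Theory Num.Theory.
Local Open Scope ring_scope.

Definition norm2 {R : rcfType} {n : nat} (v : 'cV[R]_n) : R :=
  Num.sqrt (\sum_(i < n) v i 0 ^+ 2).

Definition norm1 {R : rcfType} {n : nat} (v : 'cV[R]_n) : R :=
  \sum_(i < n) `|v i 0|.

Definition indic {R : rcfType} {N : nat} (K : {set 'I_N}) : 'cV[R]_N :=
  \col_i (if i \in K then 1 else 0).

Definition in_HK {R : rcfType} {N : nat} (K : {set 'I_N}) (t : R) (w : 'cV[R]_N) : Prop :=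
  forall i : 'I_N, (i \in K -> w i 0 < - t) /\ (i \notin K -> t < w i 0).

Definition in_box {R : rcfType} {N : nat} (x : 'cV[R]_N) : Prop :=
  forall i : 'I_N, 0 <= x i 0 <= 1.

Definition solves_box_LS {R : rcfType} {m N : nat} (A : 'M[R]_(m, N)) (b : 'cV[R]_m)
  (x : 'cV[R]_N) : Prop :=
  in_box x /\ forall y : 'cV[R]_N, in_box y -> norm2 (A *m x - b) <= norm2 (A *m y - b).

Definition feas_BP {R : rcfType} {m N : nat} (A : 'M[R]_(m, N)) (b : 'cV[R]_m) (eta : R)
  (x : 'cV[R]_N) : Prop :=
  norm2 (A *m x - b) <= eta /\ in_box x.

Definition solves_box_BP {R : rcfType} {m N : nat} (A : 'M[R]_(m, N)) (b : 'cV[R]_m) (eta : R)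
  (x : 'cV[R]_N) : Prop :=
  feas_BP A b eta x /\ forall y : 'cV[R]_N, feas_BP A b eta y -> norm1 x <= norm1 y.

(* Main.v *)
Require Import Defs.
From mathcomp Require Import all_boot all_order all_algebra.
From mathcomp Require Import ring lra.
Import Order.TTheory GRing.Theory Num.Theory.
Local Open Scope ring_scope.
Set Implicit Arguments. Unset Strict Implicit.

Section Aux.
Variable R : rcfType.

Lemma sqrt_le_aux (X Y : R) : 0 <= X -> 0 <= Y -> X <= Y ^+ 2 -> Num.sqrt X <= Y.
Proof.
move=> X0 Y0 XY; have h1 := sqr_sqrtr X0; have h2 := sqrtr_ge0 X.
set a := Num.sqrt X in h1 h2 *; nra.
Qed.

Lemma sum_sq_eq0 k (u : 'I_k -> R) : \sum_i u i ^+ 2 = 0 -> forall i, u i = 0.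
Proof.
move=> H i; have := (psumr_eq0P (P := predT) (F := fun i => u i ^+ 2)).
move=> /(_ (fun i _ => sqr_ge0 (u i)) H i isT) /eqP; by rewrite sqrf_eq0 => /eqP.
Qed.

Lemma cs k (u v : 'I_k -> R) :
  \sum_i u i * v i <= Num.sqrt (\sum_i u i ^+ 2) * Num.sqrt (\sum_i v i ^+ 2).
Proof.
have U0 : 0 <= \sum_i u i ^+ 2 by apply: sumr_ge0 => i _; apply: sqr_ge0.
have V0 : 0 <= \sum_i v i ^+ 2 by apply: sumr_ge0 => i _; apply: sqr_ge0.
have ha := sqr_sqrtr U0; have hb := sqr_sqrtr V0.
have a0 := sqrtr_ge0 (\sum_i u i ^+ 2); have b0 := sqrtr_ge0 (\sum_i v i ^+ 2).
set a := Num.sqrt _ in ha a0 *; set b := Num.sqrt _ in hb b0 *.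
have E : \sum_i (b * u i - a * v i) ^+ 2 =
   b ^+ 2 * \sum_i u i ^+ 2 - 2 * a * b * \sum_i u i * v i + a ^+ 2 * \sum_i v i ^+ 2.
  rewrite !mulr_sumr -sumrN -!big_split /=; apply: eq_bigr => i _; ring.
have P : 0 <= \sum_i (b * u i - a * v i) ^+ 2 by apply: sumr_ge0 => i _; apply: sqr_ge0.
rewrite E ha hb in P.
have [ae|an0] := eqVneq a 0.
  have : \sum_i u i ^+ 2 = 0 by rewrite -ha ae expr0n.
  move/sum_sq_eq0 => Hu; rewrite big1 => [|i _]; [by rewrite ae mul0r | by rewrite Hu mul0r].
have [be|bn0] := eqVneq b 0.
  have : \sum_i v i ^+ 2 = 0 by rewrite -hb be expr0n.
  move/sum_sq_eq0 => Hv; rewrite big1 => [|i _]; [by rewrite be mulr0 | by rewrite Hv mulr0].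
have ap : 0 < a by rewrite lt0r an0 a0.
have bp : 0 < b by rewrite lt0r bn0 b0.
have ab : 0 < a * b by rewrite mulr_gt0.
set S := \sum_i u i * v i in P *.
nra.
Qed.

Lemma sq_sum_ge k (u : 'I_k -> R) : (forall i, 0 <= u i) ->
  \sum_i u i ^+ 2 <= (\sum_i u i) ^+ 2.
Proof.
move=> H.
suff: \sum_i u i ^+ 2 <= (\sum_i u i) ^+ 2 /\ 0 <= \sum_i u i by case.
elim/big_rec2: _ => [|i y1 y2 _ [IH1 IH2]]; first by rewrite expr0n.
have := H i; split; nra.
Qed.

Lemma tri k (u v : 'cV[R]_k) : norm2 (u + v) <= norm2 u + norm2 v.
Proof.
rewrite /norm2.
have U0 : 0 <= \sum_i u i 0 ^+ 2 by apply: sumr_ge0 => i _; apply: sqr_ge0.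
have V0 : 0 <= \sum_i v i 0 ^+ 2 by apply: sumr_ge0 => i _; apply: sqr_ge0.
have ha := sqr_sqrtr U0; have hb := sqr_sqrtr V0.
have a0 := sqrtr_ge0 (\sum_i u i 0 ^+ 2); have b0 := sqrtr_ge0 (\sum_i v i 0 ^+ 2).
have C := cs (fun i => u i 0) (fun i => v i 0).
set a := Num.sqrt _ in ha a0 C *; set b := Num.sqrt _ in hb b0 C *.
apply: sqrt_le_aux.
- by apply: sumr_ge0 => i _; apply: sqr_ge0.
- by apply: addr_ge0.
have -> : \sum_i (u + v) i 0 ^+ 2 =
   \sum_i u i 0 ^+ 2 + 2 * \sum_i u i 0 * v i 0 + \sum_i v i 0 ^+ 2.
  rewrite mulr_sumr -!big_split /=; apply: eq_bigr => i _; rewrite mxE; ring.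
rewrite -ha -hb; set S := \sum_i _ in C *; nra.
Qed.

Lemma n2_le_n1 k (u : 'cV[R]_k) : norm2 u <= norm1 u.
Proof.
rewrite /norm2 /norm1; apply: sqrt_le_aux.
- by apply: sumr_ge0 => i _; apply: sqr_ge0.
- by apply: sumr_ge0 => i _.
have -> : \sum_i u i 0 ^+ 2 = \sum_i `|u i 0| ^+ 2.
  by apply: eq_bigr => i _; rewrite real_normK // num_real.
by apply: (@sq_sum_ge _ (fun i => `|u i 0|)) => i.
Qed.

End Aux.

Theorem proposition3p4 (R : rcfType) (m N : nat) (s t eta : R)
  (A : 'M[R]_(m, N)) (K : {set 'I_N}) (n : 'cV[R]_m) (x : 'cV[R]_N) :
  0 < s -> 0 < t -> 0 < eta ->
  (exists nu : 'cV[R]_m, in_HK K t (A^T *m nu) /\ norm2 nu <= s) ->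
  norm2 n <= eta ->
  let x0 : 'cV[R]_N := indic K in
  let b : 'cV[R]_m := A *m x0 + n in
  (solves_box_LS A b x \/ solves_box_BP A b eta x) ->
  norm2 (x - x0) <= 2 * s / t * eta.
Proof.
move=> s0 t0 e0 [nu [HK Hnu]] Hn x0 b Hsol.
have Hbox : in_box x by case: Hsol => [[]|[[]]].
have Hres : norm2 (A *m x - b) <= eta.
  case: Hsol => [[_ H]|[[H _] _]] //.
  have Bx0 : in_box x0.
    by move=> i; rewrite /x0 /indic mxE; case: (i \in K); rewrite /= ?ler01 ?lexx.
  apply: (le_trans (H x0 Bx0)).
  by rewrite /b opprD addrA subrr add0r /norm2; under eq_bigr => i _ do rewrite mxE sqrrN.
set h := x - x0.
have Ah : A *m h = (A *m x - b) + n.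
  by rewrite /h /b mulmxBr opprD addrA subrK.
have HAh : norm2 (A *m h) <= 2 * eta.
  rewrite Ah; have := tri (A *m x - b) n; lra.
set w := A^T *m nu.
have Hw : \sum_i w i 0 * h i 0 = \sum_j nu j 0 * (A *m h) j 0.
  rewrite /w.
  under eq_bigr => i _ do rewrite mxE mulr_suml.
  rewrite exchange_big /=; apply: eq_bigr => j _.
  rewrite mxE mulr_sumr; apply: eq_bigr => i _; rewrite mxE; ring.
have L1 : t * norm1 h <= \sum_i w i 0 * h i 0.
  rewrite /norm1 mulr_sumr; apply: ler_sum => i _.
  have /andP [xi0 xi1] := Hbox i.
  have [Hi1 Hi2] := HK i.
  have E1 : h i 0 = x i 0 - x0 i 0 by rewrite /h !mxE.
  rewrite E1.
  have -> : x0 i 0 = (if i \in K then 1 else 0) by rewrite /x0 /indic mxE.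
  case: (boolP (i \in K)) => iK.
    have := Hi1 iK; rewrite -/w => wl.
    rewrite ler0_norm; last by lra.
    nra.
  have := Hi2 iK; rewrite -/w => wl.
  rewrite subr0 ger0_norm //; nra.
have L2 := n2_le_n1 h.
have C : \sum_j nu j 0 * (A *m h) j 0 <= norm2 nu * norm2 (A *m h).
  exact: (cs (fun j => nu j 0) (fun j => (A *m h) j 0)).
have g1 := sqrtr_ge0 (\sum_i nu i 0 ^+ 2).
have g2 := sqrtr_ge0 (\sum_i (A *m h) i 0 ^+ 2).
have g3 := sqrtr_ge0 (\sum_i h i 0 ^+ 2).
rewrite -/(norm2 nu) -/(norm2 (A *m h)) in g1 g2.
rewrite -/(norm2 h) in g3.
have F : t * norm2 h <= 2 * s * eta by nra.
rewrite mulrAC ler_pdivlMr //; lra.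
Qed.
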